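(* Let $(\mathcal M,X,\bot)$ be a concurrent system, $a$ a letter, and $x$ an $a$-rooted linking execution from some state $\alpha$. Let $\mathcal M^a=\langle\Sigma\setminus\{a\}\rangle$, and fix integers $p,q\ge0$ and a state $\beta$. Then the map $\varphi:\mathcal M_{\beta,\alpha}(p)\times\mathcal M^a_{\alpha\cdot x}(q)\to\mathcal M_\beta$, $\varphi(u,v)=uxv$, is injective.
   Context: A trace monoid $\mathcal M=\mathcal M(\Sigma,I)$ is $\langle\Sigma\mid ab=ba\ ((a,b)\in I)\rangle$, $\Sigma$ finite, $I$ irreflexive symmetric; $|x|$ is length; $D=(\Sigma\times\Sigma)\setminus I$. A concurrent system $(\mathcal M,X,\bot)$: $X$ finite, $\bot\notin X$, right action of $\mathcal M$ on $X\cup\{\bot\}$ with $\bot\cdot x=\bot$. Notation: $\mathcal M_\beta=\{x:\beta\cdot x\ne\bot\}$, $\mathcal M_{\beta,\alpha}(p)=\{u:|u|=p,\ \beta\cdot u=\alpha\}$, $\mathcal M^a_{\gamma}(q)=\{v\in\mathcal M^a:|v|=q,\ \gamma\cdot v\ne\bot\}$. A linking sequence from $\alpha$ is a sequence of letters $a_1,\dots,a_p$ such that for some indices $1\le j_1<\dots<j_q\le p$: $\alpha\cdot(a_1\cdots a_p)\ne\bot$; $(a_{j_k},a_{j_{k+1}})\in D$ for all $k<q$; every letter of $\Sigma$ occurs among $a_{j_1},\dots,a_{j_q}$. It is $a$-rooted if the indices can be chosen with $a_{j_1}=a$. An $a$-rooted linking execution from $\alpha$ is the image in $\mathcal M$ of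 an $a$-rooted linking sequence from $\alpha$. *)

(* Defs.v *)
From mathcomp Require Import all_boot.
Set Implicit Arguments. Unset Strict Implicit. Unset Printing Implicit Defensive.

(* Trace monoid M(Sigma, I): words over Sigma modulo the congruence generated
   by ab = ba for (a,b) in I.  A trace is represented by any of its words;
   equality of traces is [trace_eq I]. *)
Section Traces.
Variable Sigma : finType.
Variable I : rel Sigma.

Inductive trace_eq : seq Sigma -> seq Sigma -> Prop :=
| teq_refl w : trace_eq w w
| teq_swap u v a b : I a b -> trace_eq (u ++ [:: a; b] ++ v) (u ++ [:: b; a] ++ v)
| teq_sym w1 w2 : trace_eq w1 w2 -> trace_eq w2 w1
| teq_trans w1 w2 w3 : trace_eq w1 w2 -> trace_eq w2 w3 -> trace_eq w1 w3.

Definition dep : rel Sigma := fun c d => ~~ I c d.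

(* Concurrent system: states X, sink bot = None.  The right action of M on
   X u {bot} is given by its action on letters, [act : X -> Sigma -> option X]
   (with bot . a = bot built in), extended to words; it is an action of the
   trace monoid iff the commutation condition [act_compat] holds. *)
Variable X : finType.
Variable act : X -> Sigma -> option X.

Definition actw (o : option X) (w : seq Sigma) : option X :=
  foldl (fun o c => obind (fun s => act s c) o) o w.

Definition act_compat : Prop :=
  forall (s : X) (a b : Sigma), I a b -> actw (Some s) [:: a; b] = actw (Some s) [:: b; a].

(* a-rooted linking sequence from alpha: alpha . w <> bot, and a subsequence
   a_{j_1} ... a_{j_q} of w (given as [a :: t]) with a_{j_1} = a, consecutive
   letters dependent, and containing every letter of Sigma. *)
Definition rooted_linking_seq (a : Sigma) (alpha : X) (w : seq Sigma) : Prop :=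
  actw (Some alpha) w != None /\
  exists t : seq Sigma,
    [/\ subseq (a :: t) w, path dep a t & forall c : Sigma, c \in a :: t].

Definition rooted_linking_exec (a : Sigma) (alpha : X) (x : seq Sigma) : Prop :=
  exists w, trace_eq w x /\ rooted_linking_seq a alpha w.

End Traces.

(* Main.v *)
Require Import Defs.
From mathcomp Require Import all_boot.
Set Implicit Arguments. Unset Strict Implicit. Unset Printing Implicit Defensive.

Section Aux.
Variable Sigma : finType.
Variable I : rel Sigma.
Hypothesis I_irr : irreflexive I.
Hypothesis I_sym : symmetric I.

Definition F (c d : Sigma) (s : seq Sigma) := filter (fun z => (z == c) || (z == d)) s.

Lemma catL_inj (s a b : seq Sigma) : s ++ a = s ++ b -> a = b.
Proof. elim: s => //= z s IH [] H; exact: IH. Qed.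

Lemma teq_cong p q w1 w2 : trace_eq I w1 w2 -> trace_eq I (p ++ w1 ++ q) (p ++ w2 ++ q).
Proof.
elim => [w|u v a b Hab|w3 w4 _ IH|w3 w4 w5 _ IH1 _ IH2].
- exact: teq_refl.
- have E : forall x y, p ++ (u ++ [:: x; y] ++ v) ++ q = (p ++ u) ++ [:: x; y] ++ (v ++ q).
    by move=> x y; rewrite -!catA.
  rewrite !E; exact: teq_swap.
- exact: teq_sym.
- exact: teq_trans IH2.
Qed.

Lemma proj_teq s t : trace_eq I s t -> forall c d, dep I c d -> F c d s = F c d t.
Proof.
elim => [w|u v a b Hab|w3 w4 _ IH|w3 w4 w5 _ IH1 _ IH2] c d Hcd //.
- rewrite /F !filter_cat /=; congr (_ ++ _).
  case Ha: ((a == c) || (a == d)); case Hb: ((b == c) || (b == d)) => //=.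
  exfalso; move: Hcd Hab; rewrite /dep.
  move: Ha Hb => /orP[]/eqP-> /orP[]/eqP->; rewrite ?I_irr //;
  try (by move=> /negbTE ->); by rewrite I_sym => /negbTE ->.
- by rewrite IH.
- by rewrite IH1 // IH2.
Qed.

Lemma split_first (c : Sigma) t : c \in t -> exists t1 t2, t = t1 ++ c :: t2 /\ c \notin t1.
Proof.
elim: t => // z t IH; rewrite in_cons; case: (eqVneq c z) => [<- _|cz /= Hc].
- by exists [::], t.
- have [t1 [t2 [-> H]]] := IH Hc.
  exists (z :: t1), t2; split => //; by rewrite in_cons negb_or H andbT.
Qed.

Lemma commute_left (c : Sigma) t1 t2 : (forall d, d \in t1 -> I d c) ->
  trace_eq I (t1 ++ c :: t2) (c :: t1 ++ t2).
Proof.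
elim: t1 => [_|d t1 IH H] /=; first exact: teq_refl.
apply: (@teq_trans _ _ _ (d :: c :: t1 ++ t2)).
- have := teq_cong [:: d] [::] (IH (fun e He => H e ltac:(by rewrite in_cons He orbT))).
  by rewrite /= !cats0.
- have := @teq_swap _ I [::] (t1 ++ t2) d c (H d (mem_head _ _)). by [].
Qed.

Lemma proj_conv n s t : size s <= n ->
  (forall c d, dep I c d -> F c d s = F c d t) -> trace_eq I s t.
Proof.
elim: n s t => [|n IH] [|c s'] t //= Hs Hp.
- case: t Hp => [|z t'] Hp; first exact: teq_refl.
  by have := Hp z z; rewrite /dep I_irr /F /= eqxx => /(_ isT).
- case: t Hp => [|z t'] Hp; first exact: teq_refl.
  by have := Hp z z; rewrite /dep I_irr /F /= eqxx => /(_ isT).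
- have Hc : c \in t.
    have := Hp c c; rewrite /dep I_irr => /(_ isT).
    rewrite /F /= eqxx /= => E.
    have : c \in filter (fun z => (z == c) || (z == c)) t by rewrite -E mem_head.
    by rewrite mem_filter => /andP[].
  have [t1 [t2 [Et Hc1]]] := split_first Hc.
  have Hind : forall d, d \in t1 -> I d c.
    move=> d Hd; apply/negPn/negP => Hdc.
    have Hdc' : dep I c d by rewrite /dep I_sym.
    have := Hp c d Hdc'; rewrite Et /F filter_cat /= eqxx /=.
    case E1 : (filter _ t1) => [|z r].
    + have : d \in filter (fun z => (z == c) || (z == d)) t1 by rewrite mem_filter Hd eqxx orbT.
      by rewrite E1.
    + move=> [Ez _]. have : z \in filter (fun z => (z == c) || (z == d)) t1 by rewrite E1 mem_head.
      by rewrite mem_filter -Ez (negbTE Hc1) andbF.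
  have Hcomm := commute_left t2 Hind.
  apply: (@teq_trans _ _ _ (c :: t1 ++ t2)); last by rewrite Et; exact: teq_sym.
  have := teq_cong [:: c] [::] (IH s' (t1 ++ t2) Hs _); rewrite /= !cats0; apply.
  move=> c' d' Hd.
  have := Hp c' d' Hd; rewrite Et (proj_teq Hcomm Hd) /F /=.
  by case: ifP => // _ [].
Qed.

Lemma cnt_filter (P : pred Sigma) z w : P z -> count_mem z (filter P w) = count_mem z w.
Proof.
move=> Pz; rewrite count_filter; apply: eq_count => y /=.
by case: (eqVneq y z) => [->|]; rewrite ?Pz ?andbT ?andbF.
Qed.

Lemma step c d u u' x v v' :
  F c d u ++ F c d x ++ F c d v = F c d u' ++ F c d x ++ F c d v' ->
  count_mem c u = count_mem c u' -> c \in x -> F c d u = F c d u'.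
Proof.
wlog Hle : u u' v v' / size (F c d u) <= size (F c d u').
  move=> W H1 H2 H3; case: (leqP (size (F c d u)) (size (F c d u'))) => Hl.
  - exact: (W u u' v v' Hl H1 H2 H3).
  - by symmetry; apply: (W u' u v' v (ltnW Hl)) => //; symmetry.
move=> H Hcnt Hcx.
set A := F c d u in Hle H *; set A' := F c d u' in Hle H *.
have Ht : take (size A) A' = A.
  have := congr1 (take (size A)) H; rewrite take_size_cat // take_cat.
  case: ltnP => Hl'; first by [].
  have Es : size A = size A' by apply/eqP; rewrite eqn_leq Hle Hl'.
  by rewrite Es subnn take0 cats0 take_size.
set s := drop (size A) A'.
have EA : A' = A ++ s by rewrite -{1}(cat_take_drop (size A) A') Ht.
have Hcs : c \notin s.
  apply/count_memPn.
  have : count_mem c A' = count_mem c A by rewrite /A /A' /F !cnt_filter ?eqxx.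
  by rewrite EA count_cat => /eqP; rewrite -{2}(addn0 (count_mem c A)) eqn_add2l => /eqP.
rewrite EA -catA in H; have H2 := catL_inj H.
have Hcx' : c \in F c d x by rewrite mem_filter eqxx.
have := congr1 (index c) H2; rewrite !index_cat Hcx' (negbTE Hcs) /=.
move=> /eqP; rewrite -{1}(add0n (index c _)) eqn_add2r eq_sym size_eq0 => /eqP Es.
by rewrite EA Es cats0.
Qed.

End Aux.

Theorem lemma1 (Sigma : finType) (I : rel Sigma)
  (I_irr : irreflexive I) (I_sym : symmetric I)
  (X : finType) (act : X -> Sigma -> option X)
  (hact : act_compat I act)
  (a : Sigma) (alpha : X) (x : seq Sigma)
  (hx : rooted_linking_exec I act a alpha x)
  (p q : nat) (beta : X) :
  forall u u' v v' : seq Sigma,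
    size u = p -> actw act (Some beta) u = Some alpha ->
    size u' = p -> actw act (Some beta) u' = Some alpha ->
    size v = q -> a \notin v -> actw act (actw act (Some alpha) x) v != None ->
    size v' = q -> a \notin v' -> actw act (actw act (Some alpha) x) v' != None ->
    trace_eq I (u ++ x ++ v) (u' ++ x ++ v') ->
    trace_eq I u u' /\ trace_eq I v v'.
Proof.
move=> u u' v v' _ _ _ _ _ Hav _ _ Hav' _ Hteq.
have Hp : forall c d, dep I c d ->
    F c d u ++ F c d x ++ F c d v = F c d u' ++ F c d x ++ F c d v'.
  by move=> c d Hcd; have := proj_teq I_irr I_sym Hteq Hcd; rewrite /F !filter_cat.
have Hdd : forall c, dep I c c by move=> c; rewrite /dep I_irr.
have [w [Hw [_ [t [Hsub Hpath Hall]]]]] := hx.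
have Hx : forall c, c \in x.
  move=> c; have Hcw : c \in w by apply: (mem_subseq Hsub).
  have := proj_teq I_irr I_sym Hw (Hdd c) => E.
  have : c \in F c c x by rewrite -E mem_filter eqxx.
  by rewrite mem_filter => /andP[].
have Ha : count_mem a u = count_mem a u'.
  have := congr1 (count_mem a) (Hp a a (Hdd a)).
  rewrite !count_cat /F !cnt_filter ?eqxx //.
  rewrite (count_memPn Hav) (count_memPn Hav') !addn0 => /eqP; rewrite eqn_add2r => /eqP.
  done.
have Hchain : forall t b, count_mem b u = count_mem b u' -> path (dep I) b t ->
    forall z, z \in b :: t -> count_mem z u = count_mem z u'.
  elim => [|b' t' IH] b Hb /=.
  - by move=> _ z; rewrite inE => /eqP ->.
  - move=> /andP[Hbb' Hpt] z; rewrite in_cons => /orP[/eqP -> //|Hz].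
    apply: (IH b') => //.
    have E := step (Hp _ _ Hbb') Hb (Hx b).
    have := congr1 (count_mem b') E; by rewrite /F !cnt_filter ?eqxx ?orbT.
have Hcnt : forall z, count_mem z u = count_mem z u'.
  by move=> z; apply: (Hchain t a Ha Hpath z (Hall z)).
have Hperm : perm_eq u u' by apply/allP => z _; apply/eqP; apply: Hcnt.
have HF : forall c d, dep I c d -> F c d u = F c d u' /\ F c d v = F c d v'.
  move=> c d Hcd; have H := Hp c d Hcd.
  have Hs : size (F c d u) = size (F c d u') by rewrite !size_filter; apply/permP.
  have Hu : F c d u = F c d u'.
    by have := congr1 (take (size (F c d u))) H; rewrite take_size_cat // take_size_cat.
  split => //; move: H; rewrite Hu => /catL_inj /catL_inj //.
split; apply: (@proj_conv _ _ I_irr I_sym (size _) _ _ (leqnn _)) => c d Hcd; by case: (HF c d Hcd).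
Qed.
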